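(* Let $\mathbb{F}$ be an algebraically closed field with $\mathrm{char}\,\mathbb{F}=2$ and $n\ge2$. Let $\underline{a}=(e_1,e_2,0,\ldots,0)\in\mathbb{M}^n$ and let $\underline{b}\in\mathbb{M}^n$ be such that $\dim\mathrm{alg}(\underline{b})\le2$ and $f(\underline{a})=f(\underline{b})$ for all $f\in S_n^{(2)}$. Then ${\rm G}_2\underline{a}={\rm G}_2\underline{b}$.
   Context: The split octonion algebra $\mathbf{O}$ is the 8-dimensional $\mathbb{F}$-vector space of formal matrices $a=\begin{pmatrix}\alpha&\mathbf{u}\\ \mathbf{v}&\beta\end{pmatrix}$ with $\alpha,\beta\in\mathbb{F}$, $\mathbf{u},\mathbf{v}\in\mathbb{F}^3$, with multiplication $\begin{pmatrix}\alpha&\mathbf{u}\\ \mathbf{v}&\beta\end{pmatrix}\begin{pmatrix}\alpha'&\mathbf{u}'\\ \mathbf{v}'&\beta'\end{pmatrix}=\begin{pmatrix}\alpha\alpha'+\mathbf{u}\cdot\mathbf{v}'&\alpha\mathbf{u}'+\beta'\mathbf{u}-\mathbf{v}\times\mathbf{v}'\\ \alpha'\mathbf{v}+\beta\mathbf{v}'+\mathbf{u}\times\mathbf{u}'&\beta\beta'+\mathbf{v}\cdot\mathbf{u}'\end{pmatrix}$ (dot product and cross product on $\mathbb{F}^3$). Trace $\mathrm{tr}(a)=\alpha+\beta$, norm $n(a)=\alpha\beta-\mathbf{u}\cdot\mathbf{v}$. $e_1$ has $\alpha=1$ and all else $0$, $e_2$ has $\beta=1$ and all else $0$. $\mathbb{M}=\left\{\begin{pmatrix}\alpha&(\gamma,0,0)\\(\delta,0,0)&\beta\end{pmatrix}\right\}\subseteq\mathbf{O}$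 is the quaternion subalgebra. ${\rm G}_2=\mathrm{Aut}(\mathbf{O})$ acts diagonally on $\mathbf{O}^n$. For $\underline{b}\in\mathbf{O}^n$, $\mathrm{alg}(\underline{b})$ is the (non-unital) $\mathbb{F}$-subalgebra of $\mathbf{O}$ generated by $b_1,\ldots,b_n$. $S_n^{(2)}$ is the set of functions on $\mathbf{O}^n$: $\underline{a}\mapsto n(a_i)$, $\underline{a}\mapsto\mathrm{tr}(a_i)$ ($1\le i\le n$), and $\underline{a}\mapsto\mathrm{tr}(a_ia_j)$ ($1\le i<j\le n$). *)

(* Defs.v *)
(* Split octonions over a field F, encoded as row vectors
   of length 8 with coordinates (alpha, u_1, u_2, u_3, v_1, v_2, v_3, beta). *)
From HB Require Import structures.
From mathcomp Require Import all_boot all_order all_algebra.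
Set Implicit Arguments. Unset Strict Implicit. Unset Printing Implicit Defensive.
Import Order.TTheory GRing.Theory Num.Theory.
Local Open Scope ring_scope.

Section Octonions.
Variable F : fieldType.

Definition oct := 'rV[F]_8.

Definition oalpha (x : oct) : F := x 0 (inord 0).
Definition obeta (x : oct) : F := x 0 (inord 7).
Definition ou (x : oct) : 'rV[F]_3 := \row_(k < 3) x 0 (inord k.+1).
Definition ov (x : oct) : 'rV[F]_3 := \row_(k < 3) x 0 (inord k.+4).

Definition mkoct (al : F) (u v : 'rV[F]_3) (be : F) : oct :=
  \row_(i < 8) (if (i : nat) == 0%N then al
                else if (i < 4)%N then u 0 (inord i.-1)
                else if (i < 7)%N then v 0 (inord (i - 4))
                else be).

Definition dot3 (u w : 'rV[F]_3) : F := \sum_(k < 3) u 0 k * w 0 k.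

Definition cross3 (u w : 'rV[F]_3) : 'rV[F]_3 :=
  \row_(k < 3) (u 0 (inord (k.+1 %% 3)) * w 0 (inord (k.+2 %% 3))
              - u 0 (inord (k.+2 %% 3)) * w 0 (inord (k.+1 %% 3))).

(* Zorn vector-matrix multiplication *)
Definition omul (a b : oct) : oct :=
  let al := oalpha a in let be := obeta a in let u := ou a in let v := ov a in
  let al' := oalpha b in let be' := obeta b in let u' := ou b in let v' := ov b in
  mkoct (al * al' + dot3 u v')
        (al *: u' + be' *: u - cross3 v v')
        (al' *: v + be *: v' + cross3 u u')
        (be * be' + dot3 v u').

Definition otr (a : oct) : F := oalpha a + obeta a.
Definition onorm (a : oct) : F := oalpha a * obeta a - dot3 (ou a) (ov a).

Definition oe1 : oct := mkoct 1 0 0 0.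
Definition oe2 : oct := mkoct 0 0 0 1.

(* the quaternion subalgebra M *)
Definition inM (a : oct) : Prop :=
  ou a 0 (inord 1) = 0 /\ ou a 0 (inord 2) = 0 /\
  ov a 0 (inord 1) = 0 /\ ov a 0 (inord 2) = 0.

(* G2 = Aut(O): F-linear bijective multiplicative maps, as matrices acting
   on row vectors x |-> x *m g *)
Definition isG2 (g : 'M[F]_8) : Prop :=
  g \in unitmx /\ forall x y : oct, omul x y *m g = omul (x *m g) (y *m g).

Definition in_G2orbit n (a : 'I_n -> oct) (c : 'I_n -> oct) : Prop :=
  exists g, isG2 g /\ forall i, c i = a i *m g.

(* subspaces of O are represented by matrices (row spaces, mxalgebra) *)
Definition mul_closed (U : 'M[F]_8) : Prop :=
  forall x y : oct, (x <= U)%MS -> (y <= U)%MS -> (omul x y <= U)%MS.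

Definition is_alg n (b : 'I_n -> oct) (A : 'M[F]_8) : Prop :=
  [/\ forall i, (b i <= A)%MS, mul_closed A &
      forall U : 'M[F]_8, (forall i, (b i <= U)%MS) -> mul_closed U -> (A <= U)%MS].

(* f(a) = f(b) for all f in S_n^(2) *)
Definition same_S2 n (a b : 'I_n -> oct) : Prop :=
  (forall i, onorm (a i) = onorm (b i)) /\
  (forall i, otr (a i) = otr (b i)) /\
  (forall i j : 'I_n, (i < j)%N -> otr (omul (a i) (a j)) = otr (omul (b i) (b j))).

End Octonions.

Definition a_e1e2 (F : fieldType) n : 'I_n -> oct F :=
  fun i => if (i : nat) == 0%N then oe1 F else if (i : nat) == 1%N then oe2 F else 0.
Arguments a_e1e2 : clear implicits.

(* Main.v *)
Require Import Defs.
From HB Require Import structures.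
From mathcomp Require Import all_boot all_order all_algebra.
From mathcomp Require Import ring.
Set Implicit Arguments. Unset Strict Implicit. Unset Printing Implicit Defensive.
Import GRing.Theory.
Local Open Scope ring_scope.

Definition vec8 (F : fieldType) (x0 x1 x2 x3 x4 x5 x6 x7 : F) : oct F :=
  \row_(i < 8) nth 0 [:: x0; x1; x2; x3; x4; x5; x6; x7] i.

Lemma oct_vec8 (F : fieldType) (x : oct F) :
  x = vec8 (x 0 (inord 0)) (x 0 (inord 1)) (x 0 (inord 2)) (x 0 (inord 3))
           (x 0 (inord 4)) (x 0 (inord 5)) (x 0 (inord 6)) (x 0 (inord 7)).
Proof.
apply/rowP => i; rewrite !mxE.
case: i => [[|[|[|[|[|[|[|[|//]]]]]]]] Hi] /=;
  congr (x 0 _); apply/val_inj; by rewrite /= inordK.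
Qed.

Lemma vec8_eq (F : fieldType) (x0 x1 x2 x3 x4 x5 x6 x7 y0 y1 y2 y3 y4 y5 y6 y7 : F) :
  x0 = y0 -> x1 = y1 -> x2 = y2 -> x3 = y3 -> x4 = y4 -> x5 = y5 -> x6 = y6 -> x7 = y7 ->
  vec8 x0 x1 x2 x3 x4 x5 x6 x7 = vec8 y0 y1 y2 y3 y4 y5 y6 y7.
Proof. by move=> -> -> -> -> -> -> -> ->. Qed.

Lemma omul_vec8 (F : fieldType) (x0 x1 x2 x3 x4 x5 x6 x7 y0 y1 y2 y3 y4 y5 y6 y7 : F) :
  omul (vec8 x0 x1 x2 x3 x4 x5 x6 x7) (vec8 y0 y1 y2 y3 y4 y5 y6 y7) =
  vec8 (x0*y0 + (x1*y4 + x2*y5 + x3*y6))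
       (x0*y1 + y7*x1 - (x5*y6 - x6*y5))
       (x0*y2 + y7*x2 - (x6*y4 - x4*y6))
       (x0*y3 + y7*x3 - (x4*y5 - x5*y4))
       (y0*x4 + x7*y4 + (x2*y3 - x3*y2))
       (y0*x5 + x7*y5 + (x3*y1 - x1*y3))
       (y0*x6 + x7*y6 + (x1*y2 - x2*y1))
       (x7*y7 + (x4*y1 + x5*y2 + x6*y3)).
Proof.
apply/rowP => i; rewrite /omul /mkoct /oalpha /obeta /ou /ov /dot3 /cross3 !mxE.
case: i => [[|[|[|[|[|[|[|[|//]]]]]]]] Hi] /=;
 rewrite ?big_ord_recl ?big_ord0 ?mxE /= ?inordK //= ?mxE /= ?inordK //=.
all: ring.
Qed.



Lemma vec8_add (F : fieldType) (x0 x1 x2 x3 x4 x5 x6 x7 y0 y1 y2 y3 y4 y5 y6 y7 : F) :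
  vec8 x0 x1 x2 x3 x4 x5 x6 x7 + vec8 y0 y1 y2 y3 y4 y5 y6 y7 =
  vec8 (x0+y0) (x1+y1) (x2+y2) (x3+y3) (x4+y4) (x5+y5) (x6+y6) (x7+y7).
Proof.
by apply/rowP => i; rewrite !mxE; case: i => [[|[|[|[|[|[|[|[|//]]]]]]]] Hi].
Qed.

Lemma vec8_scale (F : fieldType) (k x0 x1 x2 x3 x4 x5 x6 x7 : F) :
  k *: vec8 x0 x1 x2 x3 x4 x5 x6 x7 =
  vec8 (k*x0) (k*x1) (k*x2) (k*x3) (k*x4) (k*x5) (k*x6) (k*x7).
Proof.
by apply/rowP => i; rewrite !mxE; case: i => [[|[|[|[|[|[|[|[|//]]]]]]]] Hi].
Qed.

Lemma vec8_opp (F : fieldType) (x0 x1 x2 x3 x4 x5 x6 x7 : F) :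
  - vec8 x0 x1 x2 x3 x4 x5 x6 x7 =
  vec8 (-x0) (-x1) (-x2) (-x3) (-x4) (-x5) (-x6) (-x7).
Proof.
by apply/rowP => i; rewrite !mxE; case: i => [[|[|[|[|[|[|[|[|//]]]]]]]] Hi].
Qed.

Lemma vec8_0 (F : fieldType) : (0 : oct F) = vec8 0 0 0 0 0 0 0 0.
Proof.
by apply/rowP => i; rewrite !mxE; case: i => [[|[|[|[|[|[|[|[|//]]]]]]]] Hi].
Qed.

Lemma vec8_inj (F : fieldType) (x0 x1 x2 x3 x4 x5 x6 x7 y0 y1 y2 y3 y4 y5 y6 y7 : F) :
  vec8 x0 x1 x2 x3 x4 x5 x6 x7 = vec8 y0 y1 y2 y3 y4 y5 y6 y7 ->
  x0 = y0 /\ x1 = y1 /\ x2 = y2 /\ x3 = y3 /\ x4 = y4 /\ x5 = y5 /\ x6 = y6 /\ x7 = y7.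
Proof.
move/rowP=> H.
have G k : (k < 8)%N -> nth 0 [:: x0; x1; x2; x3; x4; x5; x6; x7] k = nth 0 [:: y0; y1; y2; y3; y4; y5; y6; y7] k.
  by move=> Hk; move: (H (inord k)); rewrite !mxE inordK.
by do !split; [apply: (G 0%N)|apply: (G 1%N)|apply: (G 2%N)|apply: (G 3%N)|apply: (G 4%N)|apply: (G 5%N)|apply: (G 6%N)|apply: (G 7%N)].
Qed.

Lemma otr_vec8 (F : fieldType) (x0 x1 x2 x3 x4 x5 x6 x7 : F) :
  otr (vec8 x0 x1 x2 x3 x4 x5 x6 x7) = x0 + x7.
Proof. by rewrite /otr /oalpha /obeta !mxE !inordK. Qed.

Lemma onorm_vec8 (F : fieldType) (x0 x1 x2 x3 x4 x5 x6 x7 : F) :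
  onorm (vec8 x0 x1 x2 x3 x4 x5 x6 x7) = x0 * x7 - (x1 * x4 + x2 * x5 + x3 * x6).
Proof.
rewrite /onorm /oalpha /obeta /ou /ov /dot3 !big_ord_recl big_ord0 !mxE /= ?inordK //= ?mxE ?inordK //=.
ring.
Qed.

Lemma oe1_vec8 (F : fieldType) : oe1 F = vec8 1 0 0 0 0 0 0 0.
Proof.
apply/rowP => i; rewrite !mxE; case: i => [[|[|[|[|[|[|[|[|//]]]]]]]] Hi] //=; by rewrite mxE.
Qed.

Lemma oe2_vec8 (F : fieldType) : oe2 F = vec8 0 0 0 0 0 0 0 1.
Proof.
apply/rowP => i; rewrite !mxE; case: i => [[|[|[|[|[|[|[|[|//]]]]]]]] Hi] //=; by rewrite mxE.
Qed.

Ltac oct1 x := rewrite [x]oct_vec8.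
Ltac octfin := rewrite ?vec8_add ?vec8_scale ?vec8_opp !omul_vec8 ?vec8_add ?vec8_scale ?vec8_opp ?otr_vec8;
  first [apply: vec8_eq; ring | ring].

Lemma omulDl (F : fieldType) (x y z : oct F) : omul (x + y) z = omul x z + omul y z.
Proof. oct1 x; oct1 y; oct1 z; octfin. Qed.
Lemma omulDr (F : fieldType) (x y z : oct F) : omul z (x + y) = omul z x + omul z y.
Proof. oct1 x; oct1 y; oct1 z; octfin. Qed.
Lemma omulZl (F : fieldType) k (x z : oct F) : omul (k *: x) z = k *: omul x z.
Proof. oct1 x; oct1 z; octfin. Qed.
Lemma omulZr (F : fieldType) k (x z : oct F) : omul z (k *: x) = k *: omul z x.
Proof. oct1 x; oct1 z; octfin. Qed.
Lemma omul_alt (F : fieldType) (x y : oct F) : omul (omul x x) y = omul x (omul x y).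
Proof. oct1 x; oct1 y; octfin. Qed.
Lemma otrC (F : fieldType) (x y : oct F) : otr (omul x y) = otr (omul y x).
Proof. oct1 x; oct1 y; octfin. Qed.
Lemma otrD (F : fieldType) (x y : oct F) : otr (x + y) = otr x + otr y.
Proof. oct1 x; oct1 y; rewrite vec8_add !otr_vec8; ring. Qed.
Lemma otrZ (F : fieldType) k (x : oct F) : otr (k *: x) = k * otr x.
Proof. oct1 x; rewrite vec8_scale !otr_vec8; ring. Qed.

Definition one8 (F : fieldType) : oct F := vec8 1 0 0 0 0 0 0 1.
Lemma omul1 (F : fieldType) (x : oct F) : omul (one8 F) x = x.
Proof. oct1 x; rewrite /one8 omul_vec8; apply: vec8_eq; ring. Qed.
Lemma oCH (F : fieldType) (x : oct F) : omul x x = otr x *: x - onorm x *: one8 F.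
Proof.
oct1 x; rewrite /one8 omul_vec8 otr_vec8 onorm_vec8 !vec8_scale vec8_opp vec8_add.
apply: vec8_eq; ring.
Qed.


Definition phi8 (F : fieldType) (p11 p12 p21 p22 : F) (x0 x1 x2 x3 x4 x5 x6 x7 : F) : oct F :=
  let e := GRing.inv (p11 * p22 - p12 * p21) in
  vec8 (e * ((p11 * x0 + p12 * x4) * p22 - (p11 * x1 + p12 * x7) * p21))
       (e * (-(p11 * x0 + p12 * x4) * p12 + (p11 * x1 + p12 * x7) * p11))
       (e * (p22 * x2 - p21 * x6))
       (p22 * x3 + p21 * x5)
       (e * ((p21 * x0 + p22 * x4) * p22 - (p21 * x1 + p22 * x7) * p21))
       (p12 * x3 + p11 * x5)
       (e * (-p12 * x2 + p11 * x6))
       (e * (-(p21 * x0 + p22 * x4) * p12 + (p21 * x1 + p22 * x7) * p11)).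

Definition dl (F : fieldType) (i : 'I_8) (k : nat) : F := ((i : nat) == k)%:R.

Definition gmx (F : fieldType) (p11 p12 p21 p22 : F) : 'M[F]_8 :=
  \matrix_(i < 8, j < 8) phi8 p11 p12 p21 p22 (dl F i 0) (dl F i 1) (dl F i 2) (dl F i 3)
                           (dl F i 4) (dl F i 5) (dl F i 6) (dl F i 7) 0 j.

Lemma gmx_mul (F : fieldType) (p11 p12 p21 p22 : F) (x0 x1 x2 x3 x4 x5 x6 x7 : F) :
  vec8 x0 x1 x2 x3 x4 x5 x6 x7 *m gmx p11 p12 p21 p22 = phi8 p11 p12 p21 p22 x0 x1 x2 x3 x4 x5 x6 x7.
Proof.
apply/rowP => j; rewrite !mxE !big_ord_recl big_ord0 /gmx /phi8 /dl !mxE /=.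
case: j => [[|[|[|[|[|[|[|[|//]]]]]]]] Hj] /=; ring.
Qed.

Lemma phi8_mul (F : fieldType) (p11 p12 p21 p22 : F) (x0 x1 x2 x3 x4 x5 x6 x7 y0 y1 y2 y3 y4 y5 y6 y7 : F) :
  p11 * p22 - p12 * p21 != 0 ->
  phi8 p11 p12 p21 p22 (x0 * y0 + (x1 * y4 + x2 * y5 + x3 * y6))
       (x0 * y1 + y7 * x1 - (x5 * y6 - x6 * y5))
       (x0 * y2 + y7 * x2 - (x6 * y4 - x4 * y6))
       (x0 * y3 + y7 * x3 - (x4 * y5 - x5 * y4))
       (y0 * x4 + x7 * y4 + (x2 * y3 - x3 * y2))
       (y0 * x5 + x7 * y5 + (x3 * y1 - x1 * y3))
       (y0 * x6 + x7 * y6 + (x1 * y2 - x2 * y1))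
       (x7 * y7 + (x4 * y1 + x5 * y2 + x6 * y3))
  = omul (phi8 p11 p12 p21 p22 x0 x1 x2 x3 x4 x5 x6 x7) (phi8 p11 p12 p21 p22 y0 y1 y2 y3 y4 y5 y6 y7).
Proof.
move=> Hd; rewrite /phi8 omul_vec8; apply: vec8_eq; field; done.
Qed.


Lemma rows_id (F : fieldType) (C : 'M[F]_8) : (forall x : oct F, x *m C = x) -> C = 1%:M.
Proof.
move=> H; apply/row_matrixP => i.
by rewrite -[C]mul1mx row_mul H.
Qed.

Lemma gmx_G2 (F : fieldType) (p11 p12 p21 p22 : F) :
  p11 * p22 - p12 * p21 != 0 -> isG2 (gmx p11 p12 p21 p22).
Proof.
move=> Hd; split.
  set e := GRing.inv (p11 * p22 - p12 * p21).
  suff Hm : gmx p11 p12 p21 p22 *m gmx (e * p22) (- (e * p12)) (- (e * p21)) (e * p11) = 1%:M.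
    by case: (mulmx1_unit Hm).
  apply: rows_id => x; rewrite [x]oct_vec8 mulmxA !gmx_mul /phi8.
  apply: vec8_eq; rewrite /e; field; done.
move=> x y; rewrite [x]oct_vec8 [y]oct_vec8 omul_vec8 !gmx_mul phi8_mul //.
Qed.

Lemma G2_mul (F : fieldType) (g h : 'M[F]_8) : isG2 g -> isG2 h -> isG2 (g *m h).
Proof.
move=> [Hg Mg] [Hh Mh]; split; first by rewrite unitmx_mul Hg Hh.
by move=> x y; rewrite !mulmxA Mg Mh.
Qed.

Lemma G2_inv (F : fieldType) (g : 'M[F]_8) : isG2 g -> isG2 (invmx g).
Proof.
move=> [Hg Mg]; split; first by rewrite unitmx_inv.
move=> x y.
have := Mg (x *m invmx g) (y *m invmx g); rewrite !mulmxKV // => <-.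
by rewrite mulmxK.
Qed.


Ltac vnorm := do 6 rewrite ?vec8_add ?vec8_scale ?vec8_opp.
Ltac vfin := vnorm; apply: vec8_eq; ring.

Lemma mul_rV2 (F : fieldType) (r : 'rV[F]_(1+1)) (X Y : oct F) :
  r *m col_mx X Y = r 0 0 *: X + r 0 1 *: Y.
Proof.
rewrite -{1}[r]hsubmxK mul_row_col [lsubmx r]mx11_scalar [rsubmx r]mx11_scalar !mul_scalar_mx.
congr (_ *: X + _ *: Y); rewrite mxE; congr (r 0 _); exact/val_inj.
Qed.

Lemma omul0r (F : fieldType) (x : oct F) : omul x 0 = 0.
Proof. rewrite [x]oct_vec8 vec8_0 omul_vec8; apply: vec8_eq; ring. Qed.



Lemma otr0 (F : fieldType) : otr (0 : oct F) = 0.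
Proof. by rewrite vec8_0 otr_vec8 addr0. Qed.

Lemma idem (F : fieldType) (X : oct F) : otr X = 1 -> onorm X = 0 -> omul X X = X.
Proof. by move=> H1 H2; rewrite oCH H1 H2 scale1r scale0r subr0. Qed.

Lemma indep (F : fieldType) (X Y : oct F) k0 k1 :
  otr X = 1 -> onorm X = 0 -> otr Y = 1 -> otr (omul X Y) = 0 ->
  k0 *: X + k1 *: Y = 0 -> k0 = 0 /\ k1 = 0.
Proof.
move=> HX NX HY HXY E.
have T2 := congr1 (fun z => otr (omul X z)) E; rewrite /= omulDr !omulZr otrD !otrZ idem // omul0r otr0 HX HXY in T2.
have K0 : k0 = 0 by move: T2; rewrite mulr0 addr0 mulr1.
split => //.
have T := congr1 (@otr F) E; rewrite otrD !otrZ HX HY otr0 K0 in T.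
by move: T; rewrite mul0r add0r mulr1.
Qed.

Lemma vid1 (F : fieldType) (X Y : oct F) c0 c1 :
  (c1 * c0) *: X + (c1 * c1 - c1) *: Y = (c0 *: X + c1 *: (c0 *: X + c1 *: Y)) - (c0 *: X + c1 *: Y).
Proof. rewrite [X]oct_vec8 [Y]oct_vec8; vfin. Qed.

Lemma prod0 (F : fieldType) (X Y : oct F) c0 c1 :
  otr X = 1 -> onorm X = 0 -> otr Y = 1 -> onorm Y = 0 -> otr (omul X Y) = 0 ->
  omul X Y = c0 *: X + c1 *: Y -> omul X Y = 0.
Proof.
move=> HX NX HY NY HXY E.
have T := congr1 (@otr F) E; rewrite otrD !otrZ HX HY HXY !mulr1 in T.
have E2 : omul X (omul X Y) = omul X Y by rewrite -omul_alt idem.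
rewrite E omulDr !omulZr idem // E in E2.
have [K1 K2] : c1 * c0 = 0 /\ c1 * c1 - c1 = 0.
  apply: (indep HX NX HY HXY); by rewrite vid1 E2 subrr.
have C0 : c0 = - c1 by apply/eqP; rewrite -addr_eq0 -T.
have C1 : c1 = 0.
  move: K1; rewrite C0 mulrN => /eqP; rewrite oppr_eq0 mulf_eq0 orbb => /eqP //.
by rewrite E C0 C1 oppr0 !scale0r addr0.
Qed.

Lemma span2 (F : fieldType) (X Y : oct F) (A : 'M[F]_8) :
  otr X = 1 -> onorm X = 0 -> otr Y = 1 -> otr (omul X Y) = 0 ->
  (X <= A)%MS -> (Y <= A)%MS -> (\rank A <= 2)%N ->
  forall x : oct F, (x <= A)%MS -> exists k0 k1, x = k0 *: X + k1 *: Y.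
Proof.
move=> HX NX HY HXY XA YA rA x xA.
have UA : (col_mx X Y <= A)%MS by rewrite col_mx_sub XA YA.
have fr : row_free (col_mx X Y).
  rewrite -kermx_eq0; apply/eqP/row_matrixP => i; rewrite row0.
  have /sub_kermxP := row_sub i (kermx (col_mx X Y)).
  rewrite mul_rV2 => /(indep HX NX HY HXY) [h0 h1].
  move: h0 h1; rewrite !mxE => h0 h1.
  apply/rowP => j; rewrite !mxE.
  case: j => [[|[|//]] Hj].
    by rewrite (_ : Ordinal Hj = 0) //; apply: val_inj.
  by rewrite (_ : Ordinal Hj = 1) //; apply: val_inj.
have rU : \rank (col_mx X Y) = 2%N by apply/eqP; exact: fr.
have AU : (A <= col_mx X Y)%MS by rewrite -(geq_leqif (mxrank_leqif_sup UA)) rU.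
have /submxP [D ->] := submx_trans xA AU.
by exists (D 0 0), (D 0 1); rewrite mul_rV2.
Qed.

Lemma sum_one (F : fieldType) (X Y : oct F) :
  otr X = 1 -> onorm X = 0 -> otr Y = 1 -> onorm Y = 0 ->
  omul X Y = 0 -> omul Y X = 0 -> X + Y = one8 F.
Proof.
move=> HX NX HY NY XY YX.
set w := X + Y.
have ww : omul w w = w by rewrite /w omulDl !omulDr !idem // XY YX addr0 add0r.
have tw : otr w = 1 + 1 by rewrite /w otrD HX HY.
set m := onorm w.
have E : w = (1 + 1) *: w - m *: one8 F by rewrite -{1}ww oCH tw.
clearbody m.
have Wm : w = m *: one8 F.
  have : w + 0 = w + (w - m *: one8 F) by rewrite addr0 {1}E scalerDl scale1r -addrA.
  by move/addrI/esym/eqP; rewrite subr_eq0 => /eqP ->.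
have mm : m * m = m.
  move: ww; rewrite Wm omulZl omulZr omul1 scalerA /one8 !vec8_scale => /vec8_inj [e0 _].
  by move: e0; rewrite !mulr1.
have [m0|m1] : m = 0 \/ m = 1.
  have : m * (m - 1) = 0 by rewrite mulrBr mm mulr1 subrr.
  move/eqP; rewrite mulf_eq0 subr_eq0 => /orP [/eqP H | /eqP H]; [left; exact: H | right; exact: H].
- exfalso.
  have Y' : Y = - X.
    by apply/eqP; rewrite -addr_eq0 addrC -/w Wm m0 scale0r.
  have : X = 0.
    move: XY; rewrite Y' -scaleN1r omulZr idem // scaleN1r => /eqP; rewrite oppr_eq0 => /eqP //.
  by move=> X0; move: HX; rewrite X0 otr0 => /eqP; rewrite eq_sym oner_eq0.
- by rewrite -/w Wm m1 scale1r.
Qed.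


Lemma exists_g (F : fieldType) (al ga de : F) : al * (1 - al) = ga * de ->
  exists g, isG2 g /\ vec8 1 0 0 0 0 0 0 0 *m g = vec8 al ga 0 0 de 0 0 (1 - al)
              /\ vec8 0 0 0 0 0 0 0 1 *m g = vec8 (1 - al) (- ga) 0 0 (- de) 0 0 al.
Proof.
move=> Hr.
have [g0|gn] := eqVneq ga 0.
  move: Hr; rewrite g0 mul0r => /eqP; rewrite mulf_eq0 subr_eq0 => /orP [] /eqP a0.
    exists (gmx 0 1 1 (- de)); split; first by apply: gmx_G2; rewrite mul0r mul1r sub0r oppr_eq0 oner_eq0.
    by rewrite !gmx_mul /phi8 ?a0; split; apply: vec8_eq; field; rewrite ?oppr_eq0 ?oner_eq0.
  exists (gmx 1 0 de 1); split; first by apply: gmx_G2; rewrite mul1r mul0r subr0 oner_eq0.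
  by rewrite !gmx_mul /phi8 -a0; split; apply: vec8_eq; field; rewrite ?oppr_eq0 ?oner_eq0.
have -> : de = al * (1 - al) / ga by rewrite Hr; field.
have [a0|an] := eqVneq al 0.
  rewrite ?a0.
  exists (gmx ga 1 1 0); split; first by apply: gmx_G2; rewrite mulr0 mul1r sub0r oppr_eq0 oner_eq0.
  by rewrite !gmx_mul /phi8 ?a0; split; apply: vec8_eq; field; rewrite ?gn ?oppr_eq0 ?oner_eq0.
exists (gmx al (- ga) (al * (1 - al) / ga) al); split.
  by apply: gmx_G2; rewrite (_ : _ - _ = al) //; field.
have Hd2 : al * al * ga - - ga * (al * (1 - al)) != 0.
  by rewrite (_ : _ - _ = al * ga) ?mulf_neq0 //; ring.
by rewrite !gmx_mul /phi8; split; apply: vec8_eq; field; rewrite ?Hd2 ?gn ?an.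
Qed.


Lemma inM_vec8 (F : fieldType) (x : oct F) : inM x ->
  x = vec8 (x 0 (inord 0)) (x 0 (inord 1)) 0 0 (x 0 (inord 4)) 0 0 (x 0 (inord 7)).
Proof.
rewrite /inM /ou /ov !mxE !inordK // => [[h1 [h2 [h3 h4]]]].
by rewrite {1}[x]oct_vec8 h1 h2 h3 h4.
Qed.

Unset Implicit Arguments.

Theorem lemma7p7 (F : closedFieldType) (Hchar : 2%N \in [pchar F])
  (n : nat) (Hn : (2 <= n)%N) (b : 'I_n -> oct F)
  (HbM : forall i, inM (b i))
  (Halg : exists A : 'M[F]_8, is_alg b A /\ (\rank A <= 2)%N)
  (HS : same_S2 (a_e1e2 F n) b) :
  forall c : 'I_n -> oct F, in_G2orbit (a_e1e2 F n) c <-> in_G2orbit b c.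
Proof.
have n0 : (0 < n)%N by apply: ltnW.
pose i0 := Ordinal n0; pose i1 := Ordinal Hn.
case: HS => [HN [HT HP]].
have a0 : a_e1e2 F n i0 = oe1 F by [].
have a1 : a_e1e2 F n i1 = oe2 F by [].
have a2 : forall i : 'I_n, (1 < i)%N -> a_e1e2 F n i = 0.
  move=> [[|[|i]] Hi] //= _.
set X := b i0; set Y := b i1.
have HX : otr X = 1 by rewrite /X -HT a0 oe1_vec8 otr_vec8 addr0.
have NX : onorm X = 0 by rewrite /X -HN a0 oe1_vec8 onorm_vec8; ring.
have HY : otr Y = 1 by rewrite /Y -HT a1 oe2_vec8 otr_vec8 add0r.
have NY : onorm Y = 0 by rewrite /Y -HN a1 oe2_vec8 onorm_vec8; ring.
have HXY : otr (omul X Y) = 0.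
  by rewrite /X /Y -HP // a0 a1 oe1_vec8 oe2_vec8 omul_vec8 otr_vec8; ring.
case: Halg => A [[bA mcA _] rA].
have SP := span2 HX NX HY HXY (bA i0) (bA i1) rA.
have XY : omul X Y = 0.
  have [c0 [c1 E]] := SP _ (mcA _ _ (bA i0) (bA i1)).
  exact: (prod0 HX NX HY NY HXY E).
have YX : omul Y X = 0.
  have [c0 [c1 E]] := SP _ (mcA _ _ (bA i1) (bA i0)).
  rewrite addrC in E.
  have HYX : otr (omul Y X) = 0 by rewrite otrC.
  exact: (prod0 HY NY HX NX HYX E).
have XY1 := sum_one HX NX HY NY XY YX.
have bi0 : forall i : 'I_n, (1 < i)%N -> b i = 0.
  move=> i Hi.
  have [k0 [k1 E]] := SP _ (bA i).
  have T : otr (b i) = 0 by rewrite -HT a2 // otr0.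
  have T2 : otr (omul X (b i)) = 0.
    by rewrite /X -(HP i0 i (ltnW Hi)) a0 (a2 i Hi) omul0r otr0.
  rewrite E otrD !otrZ HX HY !mulr1 in T.
  rewrite E omulDr !omulZr otrD !otrZ idem // HX HXY mulr0 addr0 mulr1 in T2.
  by rewrite E T2 scale0r add0r (_ : k1 = 0) ?scale0r //; move: T; rewrite T2 add0r.
have XM := @inM_vec8 _ _ (HbM i0); rewrite -/X in XM.
move: HX NX XY1; rewrite XM otr_vec8 onorm_vec8.
set al := X 0 (inord 0); set ga := X 0 (inord 1); set de := X 0 (inord 4); set be := X 0 (inord 7).
move=> HX NX XY1.
have Hbe : be = 1 - al by rewrite -HX; ring.
have Hr : al * (1 - al) = ga * de.
  apply/eqP; rewrite -subr_eq0 -Hbe; apply/eqP; rewrite -NX; ring.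
have [g [Gg [Ge1 Ge2]]] := exists_g Hr.
have HYv : Y = vec8 (1 - al) (- ga) 0 0 (- de) 0 0 al.
  have -> : Y = one8 F - vec8 al ga 0 0 de 0 0 be by rewrite -XY1 [_ + Y]addrC addrK.
  by rewrite /one8 vec8_opp vec8_add Hbe; apply: vec8_eq; ring.
have Hb : forall i, b i = a_e1e2 F n i *m g.
  move=> [[|[|k]] Hk].
  - rewrite (_ : Ordinal Hk = i0); last exact: val_inj.
    rewrite a0 oe1_vec8 Ge1 -/X; apply: (etrans XM).
    by rewrite -/al -/ga -/de -/be Hbe.
  - rewrite (_ : Ordinal Hk = i1); last exact: val_inj.
    by rewrite a1 oe2_vec8 Ge2 -/Y HYv.
  - by rewrite bi0 // a2 // mul0mx.
have Gu : g \in unitmx by case: Gg.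
move=> c; split => [[h [Gh Hc]] | [h [Gh Hc]]].
- exists (invmx g *m h); split; first by apply: G2_mul => //; apply: G2_inv.
  by move=> i; rewrite Hc Hb !mulmxA mulmxK.
- exists (g *m h); split; first by apply: G2_mul.
  by move=> i; rewrite Hc Hb mulmxA.
Qed.
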